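(* For $n$ complex alternating matrices $A_1,\ldots,A_n$ of size $n$ and $n-1$ complex symmetric matrices $B_1,\ldots,B_{n-1}$ of size $n$, we have $$\sum_{\sigma\in S_n,\ \tau\in S_{n-1}}\operatorname{sgn}(\sigma)\operatorname{sgn}(\tau)\,A_{\sigma(1)}B_{\tau(1)}A_{\sigma(2)}B_{\tau(2)}\cdots A_{\sigma(n-1)}B_{\tau(n-1)}A_{\sigma(n)}=0.$$
   Context: A matrix $M$ is alternating if ${}^tM=-M$ and symmetric if ${}^tM=M$. *)

(* Defs.v *)
From HB Require Import structures.
From mathcomp Require Import all_boot all_order all_algebra all_fingroup.
From mathcomp Require Import reals.
From mathcomp Require Import complex.
Set Implicit Arguments. Unset Strict Implicit. Unset Printing Implicit Defensive.
Import Order.TTheory GRing.Theory Num.Theory.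
Local Open Scope ring_scope.

Definition alternating_mx (F : pzRingType) (n : nat) (M : 'M[F]_n) : Prop :=
  M^T = - M.
Definition symmetric_mx (F : pzRingType) (n : nat) (M : 'M[F]_n) : Prop :=
  M^T = M.

(* Main.v *)
Require Import Defs.
From HB Require Import structures.
From mathcomp Require Import all_boot all_order all_algebra all_fingroup.
From mathcomp Require Import reals.
From mathcomp Require Import complex.
From mathcomp Require Import zify.
From Stdlib Require Import FunctionalExtensionality.
Set Implicit Arguments. Unset Strict Implicit. Unset Printing Implicit Defensive.
Import Order.TTheory GRing.Theory Num.Theory.
Local Open Scope ring_scope.

Section Main.
Variable F : numFieldType.
Variable p : nat.
Local Notation M := 'M[F]_p.+1.

Definition Pm (a b : nat -> M) (m : nat) : M :=
  (\prod_(0 <= i < m) (a i *m b i)) *m a m.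

Lemma Pm0 a b : Pm a b 0 = a 0.
Proof. by rewrite /Pm big_geq // mul1mx. Qed.

Lemma Pm_recl a b m :
  Pm a b m.+1 = a 0 *m b 0 *m Pm (fun i => a i.+1) (fun i => b i.+1) m.
Proof.
by rewrite /Pm big_nat_recl // -mulmxE mulmxA.
Qed.

Lemma Pm_recr a b m : Pm a b m.+1 = Pm a b m *m b m *m a m.+1.
Proof.
by rewrite /Pm big_nat_recr //= -mulmxE !mulmxA.
Qed.

Lemma eq_Pm a b a' b' m :
  (forall i, (i <= m)%N -> a i = a' i) -> (forall i, (i < m)%N -> b i = b' i) ->
  Pm a b m = Pm a' b' m.
Proof.
move=> ha hb; rewrite /Pm (ha m) //; congr (_ *m _).
apply: eq_big_nat => i /andP[_ hi]; by rewrite ha ?hb // ltnW.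
Qed.

Lemma Pm_tr a b m :
  (forall i, (a i)^T = - a i) -> (forall i, (b i)^T = b i) ->
  (Pm a b m)^T = (-1) ^+ m.+1 *: Pm (fun i => a (m - i)%N) (fun i => b (m.-1 - i)%N) m.
Proof.
elim: m a b => [|m IH] a b ha hb.
  by rewrite !Pm0 ha expr1 scaleN1r.
rewrite Pm_recr trmx_mul (trmx_mul (Pm a b m) (b m)).
rewrite IH // ha hb Pm_recl /= !subn0.
rewrite exprS -!scalemxAr mulNmx scalerN -scaleNr mulN1r opprK !exprS mulN1r mulN1r opprK mulmxA.
congr (_ *: _); congr (_ *m _).
apply: eq_Pm => i hi //. congr (b _). by rewrite subnS -subn1 subnAC subn1.
Qed.

End Main.

Section Perms.
Variable n : nat.

Definition rfun (m : 'I_n.+1) (i : 'I_n) : 'I_n :=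
  if (i < m)%N then insubd i (m.-1 - i)%N else i.

Lemma rfun_val m i : val (rfun m i) = if (i < m)%N then (m.-1 - i)%N else val i.
Proof.
rewrite /rfun; case: ifP => // him; rewrite val_insubd.
have hm := ltn_ord m.
by rewrite ifT //; apply: leq_ltn_trans (leq_subr _ _) _; rewrite -ltnS prednK // (leq_ltn_trans _ him).
Qed.

Lemma rfunK m : involutive (rfun m).
Proof.
move=> i; apply: val_inj; rewrite !rfun_val.
case: (ltnP i m) => him.
  have h0 : (0 < m)%N by apply: leq_ltn_trans him.
  have h1 : (m.-1 - i < m)%N by apply: leq_ltn_trans (leq_subr _ _) _; rewrite prednK.
  rewrite /= h1 subKn //; by rewrite -ltnS prednK.
by rewrite ltnNge him.
Qed.

Definition Rp' m : 'S_n := perm (can_inj (rfunK m)).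

Lemma Rp'E m i : val (Rp' m i) = if (i < m)%N then (m.-1 - i)%N else val i.
Proof. by rewrite permE rfun_val. Qed.

Lemma Rp'K m : (Rp' m * Rp' m = 1)%g.
Proof. by apply/permP => i; rewrite permM perm1 !permE rfunK. Qed.

Definition Rp (m : 'I_n.+1) : 'S_n.+1 := lift_perm ord0 m (Rp' m).

Lemma RpE m (i : nat) : (i <= n)%N ->
  val (Rp m (inord i)) = if (i <= m)%N then (m - i)%N else i.
Proof.
case: i => [|i] hi.
  have -> : inord 0 = ord0 :> 'I_n.+1 by apply: val_inj; rewrite /= inordK.
  by rewrite /Rp lift_perm_id subn0 leq0n.
have -> : inord i.+1 = lift ord0 (Ordinal hi) :> 'I_n.+1.
  by apply: val_inj; rewrite /= inordK.
rewrite /Rp lift_perm_lift /= /bump Rp'E /=.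
case: (ltnP i m) => him.
  have h0 : (0 < m)%N by apply: leq_ltn_trans him.
  rewrite leqNgt (leq_ltn_trans (leq_subr _ _)) /= ?prednK // add0n.
  by rewrite subnS -[m.-1]subn1 subnAC subn1.
by rewrite him add1n.
Qed.

Lemma sign_Rp (R : pzRingType) m :
  ((-1) ^+ (Rp m) * (-1) ^+ (Rp' m) = (-1) ^+ m :> R).
Proof.
rewrite -signr_addb /Rp odd_lift_perm /= -addbA addbb addbF.
by rewrite signr_odd.
Qed.

End Perms.

Section Sums.
Variable F : numFieldType.
Variables p n : nat.
Local Notation M := 'M[F]_p.+1.

Definition a_of (A : 'I_n.+1 -> M) (s : 'S_n.+1) (i : nat) : M := A (s (inord i)).
Definition b_of (B : 'I_n -> M) (t : 'S_n) (i : nat) : M :=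
  if insub i is Some o then B (t o) else 0.

Definition Ssum A B : M := \sum_(s : 'S_n.+1) \sum_(t : 'S_n)
  ((-1) ^+ s * (-1) ^+ t) *: Pm (a_of A s) (b_of B t) n.

Lemma a_of_R A (m : 'I_n.+1) s i : (i <= m)%N ->
  a_of A (Rp m * s) i = a_of A s (m - i).
Proof.
move=> him; rewrite /a_of permM; congr (A (s _)); apply: val_inj.
have hin : (i <= n)%N by rewrite (leq_trans him) // -ltnS.
rewrite RpE // him /= inordK // ltnS (leq_trans (leq_subr _ _)) // -ltnS; exact: ltn_ord.
Qed.

Lemma a_of_R_gt A (m : 'I_n.+1) s i : (m < i)%N -> (i <= n)%N ->
  a_of A (Rp m * s) i = a_of A s i.
Proof.
move=> him hin; rewrite /a_of permM; congr (A (s _)); apply: val_inj.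
by rewrite RpE // leqNgt him /= inordK.
Qed.

Lemma b_of_R B (m : 'I_n.+1) t i : (i < m)%N ->
  b_of B (Rp' m * t) i = b_of B t (m.-1 - i).
Proof.
move=> him; have hin : (i < n)%N by rewrite (leq_trans him) // -ltnS.
rewrite /b_of insubT /= permM.
have -> : (m.-1 - i)%N = val (Rp' m (Ordinal hin)) by rewrite Rp'E /= him.
by rewrite valK.
Qed.

Lemma b_of_R_ge B (m : 'I_n.+1) t i : (m <= i)%N ->
  b_of B (Rp' m * t) i = b_of B t i.
Proof.
move=> him; rewrite /b_of; case: insubP => // o _ ho.
rewrite permM; congr (B (t _)); apply: val_inj; by rewrite Rp'E /= ho ltnNge him.
Qed.

Lemma b_of_sym B t : (forall j, (B j)^T = B j) -> forall i, (b_of B t i)^T = b_of B t i.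
Proof. by move=> hB i; rewrite /b_of; case: insub => [o|] //; rewrite trmx0. Qed.

Lemma a_of_alt A s : (forall j, (A j)^T = - A j) -> forall i, (a_of A s i)^T = - a_of A s i.
Proof. by move=> hA i; rewrite /a_of. Qed.

Lemma sgnM (T : finType) (x y : {perm T}) :
  (-1) ^+ (x * y)%g = (-1) ^+ x * (-1) ^+ y :> F.
Proof. by rewrite odd_permM signr_addb. Qed.
Lemma sgnV (T : finType) (x : {perm T}) : (-1) ^+ (x^-1)%g = (-1) ^+ x :> F.
Proof. by rewrite odd_permV. Qed.

Lemma Ssum_alt A B : (forall j, (A j)^T = - A j) -> (forall j, (B j)^T = B j) ->
  (Ssum A B)^T = - Ssum A B.
Proof.
move=> hA hB; set r := Rp (@ord_max n); set r' := Rp' (@ord_max n).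
have key s t : (Pm (a_of A s) (b_of B t) n)^T =
    (-1) ^+ n.+1 *: Pm (a_of A (r * s)) (b_of B (r' * t)) n.
  rewrite Pm_tr; last 2 first.
- by move=> i; rewrite /a_of hA.
- exact: b_of_sym.
congr (_ *: _); apply: eq_Pm => i hi.
    by rewrite a_of_R.
  by rewrite b_of_R.
rewrite /Ssum raddf_sum /=.
under eq_bigr do rewrite raddf_sum /=.
under eq_bigr do under eq_bigr do rewrite linearZ /= key.
rewrite (reindex_inj (mulgI (r^-1)%g)) /=.
under eq_bigr do rewrite (reindex_inj (mulgI (r'^-1)%g)) /=.
rewrite -sumrN; apply: eq_bigr => s _; rewrite -sumrN; apply: eq_bigr => t _.
rewrite !mulKVg scalerA -scaleNr; congr (_ *: _).
rewrite !sgnM !sgnV.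
have hs : ((-1) ^+ r * (-1) ^+ r' = (-1) ^+ n :> F) by rewrite sign_Rp.
by rewrite mulrACA hs exprS mulN1r mulrN mulrAC -expr2 -exprM mulnC exprM sqrrN expr1n expr1n mul1r.
Qed.

End Sums.

Section Kill.
Variable F : numFieldType.
Variables p n : nat.
Local Notation M := 'M[F]_p.+1.

Definition Qm (a b : nat -> M) m := Pm (fun i => a (i + m.+1)%N) (fun i => b (i + m.+1)%N) (n - m.+1).

Lemma Pm_split (a b : nat -> M) m : (m < n)%N ->
  Pm a b n = Pm a b m *m b m *m Qm a b m.
Proof.
move=> hmn; rewrite /Qm /Pm (big_cat_nat (n:=m)) //=; last exact: ltnW.
rewrite (@big_ltn _ _ _ m n) // (big_addn 0 n m.+1) subnK //.
by rewrite -!mulmxE !mulmxA.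
Qed.

Lemma xPm (x : 'rV[F]_p.+1) (a b : nat -> M) m : (m < n)%N -> b m = x^T *m x ->
  x *m Pm a b n = (x *m Pm a b m *m x^T) *m (x *m Qm a b m).
Proof.
by move=> hmn hb; rewrite (Pm_split _ _ hmn) hb !mulmxA.
Qed.

Lemma tr11 (u : 'M[F]_1) : u^T = u.
Proof. by rewrite [u]mx11_scalar tr_scalar_mx. Qed.

End Kill.

Section Kill2.
Variable F : numFieldType.
Variables p n : nat.
Local Notation M := 'M[F]_p.+1.

Lemma Ssum_kill (A : 'I_n.+1 -> M) (B : 'I_n -> M) (j : 'I_n) (x : 'rV[F]_p.+1) :
  (forall k, (A k)^T = - A k) -> (forall k, (B k)^T = B k) -> B j = x^T *m x ->
  x *m Ssum A B = 0.
Proof.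
move=> hA hB hj.
pose term (s : 'S_n.+1) (t : 'S_n) := x *m (((-1) ^+ s * (-1) ^+ t) *: Pm (a_of A s) (b_of B t) n).
pose mt (t : 'S_n) := (t^-1)%g j.
pose MM (t : 'S_n) : 'I_n.+1 := widen_ord (leqnSn n) (mt t).
pose psi (t : 'S_n) := (Rp' (MM t) * t)%g.
have hmt (t : 'S_n) : t (mt t) = j by rewrite /mt permKV.
have hb (t : 'S_n) : b_of B t (mt t) = x^T *m x by rewrite /b_of valK hmt.
have F1 (t : 'S_n) : mt (psi t) = mt t.
  apply: (@perm_inj _ (psi t)); rewrite hmt /psi permM.
  have -> : Rp' (MM t) (mt t) = mt t by apply: val_inj; rewrite Rp'E /= ltnn.
  by rewrite hmt.
have F1' (t : 'S_n) : MM (psi t) = MM t by apply: val_inj; rewrite /= F1.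
have F3 : involutive psi.
  by move=> t; rewrite /psi -/(psi t) F1' mulgA Rp'K mul1g.
have F2 (s : 'S_n.+1) (t : 'S_n) : term (Rp (MM t) * s)%g (psi t) = - term s t.
  have hm : (mt t < n)%N := ltn_ord (mt t).
  have hM : nat_of_ord (MM t) = mt t by [].
  rewrite /term -!scalemxAr (xPm _ hm (hb t)).
  have hb' := hb (psi t); rewrite F1 in hb'.
  rewrite (xPm _ hm hb').
  have eQ : Qm n (a_of A (Rp (MM t) * s)) (b_of B (psi t)) (mt t) = Qm n (a_of A s) (b_of B t) (mt t).
    apply: eq_Pm => i hi.
      rewrite a_of_R_gt // ?hM ?addnS ?ltnS ?leq_addl //.
      lia.
    by rewrite /psi b_of_R_ge // hM addnS ltnW // ltnS leq_addl.
  rewrite eQ.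
  have eP : Pm (a_of A (Rp (MM t) * s)) (b_of B (psi t)) (mt t) =
      (-1) ^+ (mt t).+1 *: (Pm (a_of A s) (b_of B t) (mt t))^T.
    rewrite Pm_tr; last 2 first.
    - by move=> i; rewrite /a_of hA.
    - exact: b_of_sym.
    rewrite scalerA -expr2 -exprM mulnC exprM sqrrN !expr1n scale1r.
    apply: eq_Pm => i hi.
      by rewrite a_of_R.
    by rewrite /psi b_of_R.
  have eT : x *m (Pm (a_of A s) (b_of B t) (mt t))^T *m x^T =
      x *m Pm (a_of A s) (b_of B t) (mt t) *m x^T.
    by rewrite -[RHS]tr11 !trmx_mul trmxK mulmxA.
  rewrite eP -scalemxAr -scalemxAl eT -scalemxAl scalerA -scaleNr; congr (_ *: _).
  rewrite /psi !sgnM mulrACA sign_Rp hM exprS.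
  by rewrite mulN1r mulrN mulrAC -expr2 -exprM mulnC exprM sqrrN !expr1n mul1r.
have -> : x *m Ssum A B = \sum_t \sum_s term s t.
  rewrite /Ssum mulmx_sumr; under eq_bigr do rewrite mulmx_sumr.
  by rewrite exchange_big.
set T := \sum_t _.
have hT : T = - T.
  rewrite {1}/T (reindex_inj (can_inj F3)) /= -sumrN; apply: eq_bigr => t _.
  rewrite (reindex_inj (mulgI (Rp (MM (psi t))))) /= F1' -sumrN.
  by apply: eq_bigr => s _; rewrite F2.
have h2 : (2%:R : F) *: T = 0 by rewrite scaler_nat mulr2n {1}hT addNr.
have := congr1 (fun v => (2%:R : F)^-1 *: v) h2.
by rewrite /= scalerA mulVf ?pnatr_eq0 // scale1r scaler0.
Qed.
End Kill2.

Section Lin.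
Variable F : numFieldType.
Variables p n : nat.
Local Notation M := 'M[F]_p.+1.

Definition Bup (B : 'I_n -> M) (k : 'I_n) (X : M) : 'I_n -> M :=
  fun j => if j == k then X else B j.

Lemma bup_off B k Z (t : 'S_n) i : i != val ((t^-1)%g k) ->
  b_of (Bup B k Z) t i = b_of B t i.
Proof.
move=> hi; rewrite /b_of; case: insubP => // o _ ho.
rewrite /Bup; case: eqP => // htk.
by move: hi; rewrite -ho -htk permK eqxx.
Qed.

Lemma bup_on B k Z (t : 'S_n) : b_of (Bup B k Z) t ((t^-1)%g k) = Z.
Proof. by rewrite /b_of valK /Bup permKV eqxx. Qed.

Lemma Pm_bup (A : 'I_n.+1 -> M) B k Z s (t : 'S_n) :
  Pm (a_of A s) (b_of (Bup B k Z) t) n =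
  Pm (a_of A s) (b_of B t) ((t^-1)%g k) *m Z *m Qm n (a_of A s) (b_of B t) ((t^-1)%g k).
Proof.
rewrite (Pm_split _ _ (ltn_ord ((t^-1)%g k))) bup_on; congr (_ *m _ *m _).
  apply: eq_Pm => // i hi; rewrite bup_off //; by rewrite neq_ltn hi.
apply: eq_Pm => // i hi; rewrite bup_off //; by rewrite neq_ltn addnS ltnS leq_addl orbT.
Qed.

Lemma Ssum_lin A B k c X Y :
  Ssum A (Bup B k (c *: X + Y)) = c *: Ssum A (Bup B k X) + Ssum A (Bup B k Y).
Proof.
rewrite /Ssum scaler_sumr -big_split /=; apply: eq_bigr => s _.
rewrite scaler_sumr -big_split /=; apply: eq_bigr => t _.
rewrite !Pm_bup mulmxDr mulmxDl -scalemxAr -scalemxAl scalerDr !scalerA mulrC.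
by rewrite -scalerA.
Qed.

Lemma Ssum_lin0 A B k : Ssum A (Bup B k 0) = 0.
Proof.
have := Ssum_lin A B k (-1) 0 0.
by rewrite scaler0 add0r scaleN1r addNr.
Qed.

Lemma Ssum_linZ A B k c X : Ssum A (Bup B k X) = 0 -> Ssum A (Bup B k (c *: X)) = 0.
Proof. by move=> h; rewrite -[c *: X]addr0 Ssum_lin h Ssum_lin0 scaler0 addr0. Qed.

Lemma Ssum_linD A B k X Y : Ssum A (Bup B k X) = 0 -> Ssum A (Bup B k Y) = 0 ->
  Ssum A (Bup B k (X + Y)) = 0.
Proof. by move=> h1 h2; rewrite -[X]scale1r Ssum_lin h1 h2 scaler0 addr0. Qed.

Lemma Ssum_linN A B k X : Ssum A (Bup B k X) = 0 -> Ssum A (Bup B k (- X)) = 0.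
Proof. by move=> h; rewrite -scaleN1r Ssum_linZ. Qed.

Lemma Ssum_linS A B k (I : finType) (f : I -> M) :
  (forall i, Ssum A (Bup B k (f i)) = 0) -> Ssum A (Bup B k (\sum_i f i)) = 0.
Proof.
move=> h; elim/big_rec: _ => [|i X _ hX]; first exact: Ssum_lin0.
exact: Ssum_linD.
Qed.

End Lin.

Section Final.
Variable F : numFieldType.
Variable n : nat.

Lemma half0 (a : F) : a = - a -> a = 0.
Proof.
move=> h; have h2 : a *+ 2 = 0 by rewrite mulr2n {1}h addNr.
by move/eqP: h2; rewrite mulrn_eq0 /= => /eqP.
Qed.

Lemma sum_ind (m : nat) (G : 'I_m -> F) (e : 'I_m) :
  \sum_c G c * (c == e)%:R = G e.
Proof.
rewrite (bigD1 e) //= eqxx mulr1 big1 ?addr0 // => c /negbTE ->; by rewrite mulr0.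
Qed.

Lemma alt_rank1 (S : 'M[F]_n.+1) : S^T = - S -> (\rank S <= 1)%N -> S = 0.
Proof.
move=> hS hr; apply/matrixP => i k; rewrite mxE.
have hSE a b : S b a = - S a b.
  by have := congr1 (fun M : 'M[F]_n.+1 => M b a) hS; rewrite !mxE => ->; rewrite opprK.
have hd a : S a a = 0 by apply: half0; rewrite -hSE.
apply/eqP; apply/negP => /negP hik.
pose Mm : 'M[F]_(2, n.+1) := \matrix_(r, c)
  (if r == 0 then - (S i k)^-1 * (c == k)%:R else (S i k)^-1 * (c == i)%:R).
pose Nn : 'M[F]_(n.+1, 2) := \matrix_(c, b) (if b == 0 then (c == i)%:R else (c == k)%:R).
have eN b (G : 'I_n.+1 -> F) : \sum_j G j * Nn j b = G (if b == 0 then i else k).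
  rewrite -sum_ind; apply: eq_bigr => j _; rewrite mxE; by case: ifP.
have eM r (G : 'I_n.+1 -> F) : \sum_c Mm r c * G c =
    (if r == 0 then - (S i k)^-1 * G k else (S i k)^-1 * G i).
  case: ifP => hr0.
    rewrite -(sum_ind (fun c => - (S i k)^-1 * G c)); apply: eq_bigr => c _.
    by rewrite mxE hr0 mulrAC.
  rewrite -(sum_ind (fun c => (S i k)^-1 * G c)); apply: eq_bigr => c _.
  by rewrite mxE hr0 mulrAC.
have e1 : Mm *m S *m Nn = 1%:M.
  apply/matrixP => r b; rewrite !mxE eN mxE eM.
  have ha : S i k != 0 by [].
  case: b => [[|[|//]] hb]; case: r => [[|[|//]] hr0] /=.
  - by rewrite (hSE i k) mulrNN mulVf.
  - by rewrite hd mulr0.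
  - by rewrite hd mulr0.
  - by rewrite mulVf.
have := mulmx1_min_rank e1.
by rewrite leqNgt ltnS hr.
Qed.

End Final.

Section Ind.
Variable F : numFieldType.
Variable n : nat.
Local Notation M := 'M[F]_n.+1.
Local Notation V := 'rV[F]_n.+1.

Definition indep k (x : 'I_n -> V) := forall c : 'I_n -> F,
  \sum_(j : 'I_n | (k <= j)%N) c j *: x j = 0 -> forall j : 'I_n, (k <= j)%N -> c j = 0.
Definition Xg k (x : 'I_n -> V) : 'M[F]_(n, n.+1) :=
  \matrix_j (if (k <= j)%N then x j else 0).
Definition xup (x : 'I_n -> V) kk y := fun j => if j == kk then y else x j.

Lemma exists_out (X : 'M[F]_(n, n.+1)) : exists z : V, ~~ (z <= X)%MS.
Proof.
have : ~~ (1%:M <= X)%MS.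
  apply/negP => /mxrankS; rewrite mxrank1 => h.
  by have := leq_trans h (rank_leq_row X); rewrite ltnn.
by case/row_subPn => i hi; exists (row i 1%:M).
Qed.

Lemma Xg_mul k x (D : 'rV[F]_n) :
  D *m Xg k x = \sum_(j : 'I_n | (k <= j)%N) D 0 j *: x j.
Proof.
rewrite mulmx_sum_row [RHS]big_mkcond /=; apply: eq_bigr => j _.
by rewrite rowK; case: ifP => _ //; rewrite scaler0.
Qed.

Lemma indep_step k (kk : 'I_n) x y : val kk = k -> indep k.+1 x ->
  ~~ (y <= Xg k.+1 x)%MS -> indep k (xup x kk y).
Proof.
move=> hkk hind hy c hc.
have hsplit : \sum_(j : 'I_n | (k <= j)%N) c j *: xup x kk y j =
    c kk *: y + \sum_(j : 'I_n | (k.+1 <= j)%N) c j *: x j.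
  rewrite (bigD1 kk) /= ?hkk // /xup eqxx; congr (_ + _).
  apply: eq_big => j.
    by rewrite ltn_neqAle -hkk eq_sym; case: (j =P kk) => [->|/eqP hj]; rewrite ?eqxx //= andbC.
  by move=> /andP[_ /negbTE ->].
rewrite hsplit in hc.
have hc0 : c kk = 0.
  apply/eqP; apply/negP => /negP hck; case/negP: hy.
  have -> : y = (\row_j (- (c kk)^-1 * c j)) *m Xg k.+1 x.
    rewrite Xg_mul.
    have -> : \sum_(j : 'I_n | (k.+1 <= j)%N) (\row_j0 (- (c kk)^-1 * c j0)) 0 j *: x j =
       - (c kk)^-1 *: \sum_(j : 'I_n | (k.+1 <= j)%N) c j *: x j.
      rewrite scaler_sumr; apply: eq_bigr => j _; by rewrite mxE scalerA.
    have -> : \sum_(j : 'I_n | (k.+1 <= j)%N) c j *: x j = - (c kk *: y).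
      by apply/eqP; rewrite -addr_eq0 addrC hc.
    by rewrite scalerN scaleNr opprK scalerA mulVf // scale1r.
  exact: submxMl.
rewrite hc0 scale0r add0r in hc.
move=> j hj; case: (j =P kk) => [->//|/eqP hjk].
apply: (hind c hc j); rewrite ltn_neqAle hj andbT -hkk; apply: contra hjk.
by move/eqP=> h; apply/eqP/val_inj.
Qed.

Lemma rank_indep x : indep 0 x -> \rank (\matrix_j x j) = n.
Proof.
move=> hind; apply/eqP; rewrite eqn_leq rank_leq_row /= leqNgt; apply/negP => hlt.
set X := \matrix_j x j.
have hK : kermx X != 0 by rewrite -mxrank_eq0 mxrank_ker subn_eq0 -ltnNge.
have [i hi] : exists i, row i (kermx X) != 0.
  apply/existsP; apply: contraR hK; rewrite negb_exists => /forallP h.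
  apply/eqP/row_matrixP => i; rewrite row0; exact/eqP/negbNE/h.
have hc : \sum_(j : 'I_n | (0 <= j)%N) row i (kermx X) 0 j *: x j = 0.
  have : row i (kermx X) *m X = 0 by rewrite -row_mul mulmx_ker row0.
  rewrite mulmx_sum_row => h; rewrite -[RHS]h; apply: eq_bigr => l _.
  by rewrite rowK.
case/negP: hi; apply/eqP/rowP => j.
by rewrite (hind _ hc j (leq0n _)) mxE.
Qed.

End Ind.

Lemma grp4 (W : zmodType) (a b c d : W) :
  (a + b) + (c + d) + ((a - b) + (- c + d)) = a *+ 2 + d *+ 2.
Proof.
rewrite addrACA [X in X + _]addrACA subrr addr0 [- c + d]addrC [c + d]addrC [X in _ + X]addrACA subrr addr0.
by rewrite !mulr2n.
Qed.

Lemma grp5 (W : zmodType) (a b c d : W) : b + c = a + b + (c + d) - a - d.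
Proof.
by rewrite addrA (addrAC _ (- a) (- d)) addrK -(addrA a) (addrC a) addrK.
Qed.

Section Ind2.
Variable F : numFieldType.
Variable n : nat.
Local Notation M := 'M[F]_n.+1.
Local Notation V := 'rV[F]_n.+1.

Lemma trD (a b : V) : (a + b)^T = a^T + b^T.
Proof. by apply/matrixP => i j; rewrite !mxE. Qed.
Lemma trB (a b : V) : (a - b)^T = a^T - b^T.
Proof. by apply/matrixP => i j; rewrite !mxE. Qed.

Lemma ww_decomp (w z : V) :
  w^T *m w = (2%:R : F)^-1 *: ((w + z)^T *m (w + z) + (w - z)^T *m (w - z)) - z^T *m z.
Proof.
rewrite trD trB !mulmxDl !mulmxDr !mulmxN !mulNmx opprK grp4.
rewrite -!scaler_nat scalerDr !scalerA mulVf ?pnatr_eq0 // !scale1r.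
by rewrite addrK.
Qed.

Lemma sym_decomp (X : M) : X^T = X ->
  X = (2%:R : F)^-1 *: \sum_i \sum_l X i l *: (delta_mx i l + delta_mx l i).
Proof.
move=> hX.
have e2 : X^T = \sum_i \sum_l X i l *: delta_mx l i.
  rewrite {1}[X]matrix_sum_delta raddf_sum; apply: eq_bigr => i _.
  rewrite raddf_sum; apply: eq_bigr => l _.
  by apply/matrixP => a b; rewrite !mxE andbC.
have e : X + X^T = \sum_i \sum_l X i l *: (delta_mx i l + delta_mx l i).
  rewrite e2 {1}(matrix_sum_delta X) -big_split /=; apply: eq_bigr => i _.
  rewrite -big_split /=; apply: eq_bigr => l _; by rewrite scalerDr.
by rewrite -e hX -mulr2n -scaler_nat scalerA mulVf ?pnatr_eq0 // scale1r.
Qed.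

Lemma delta_decomp (i l : 'I_n.+1) :
  delta_mx i l + delta_mx l i =
  (delta_mx 0 i + delta_mx 0 l : V)^T *m (delta_mx 0 i + delta_mx 0 l)
  - (delta_mx 0 i : V)^T *m delta_mx 0 i - (delta_mx 0 l : V)^T *m delta_mx 0 l.
Proof.
rewrite trD !trmx_delta mulmxDl !mulmxDr !mul_delta_mx.
exact: grp5.
Qed.

End Ind2.

Section Ind3.
Variable F : numFieldType.
Variable n : nat.
Local Notation M := 'M[F]_n.+1.
Local Notation V := 'rV[F]_n.+1.

Lemma Pind (A : 'I_n.+1 -> M) : (forall j, (A j)^T = - A j) ->
  forall k, (k <= n)%N -> forall (B : 'I_n -> M) (x : 'I_n -> V),
  (forall j, (B j)^T = B j) -> (forall j : 'I_n, (k <= j)%N -> B j = (x j)^T *m x j) ->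
  indep k x -> Ssum A B = 0.
Proof.
move=> hA; elim=> [|k IH] hk B x hB hBx hind.
  set S := Ssum A B.
  have hXS : (\matrix_j x j) *m S = 0.
    apply/row_matrixP => j; rewrite row_mul rowK row0.
    exact: (Ssum_kill hA hB (hBx j (leq0n _))).
  have hr := mulmx0_rank_max hXS.
  rewrite rank_indep // in hr.
  apply: alt_rank1; first exact: Ssum_alt.
  by rewrite -(leq_add2l n) addn1.
have hkn : (k < n)%N by [].
set kk := Ordinal hkn.
have L1 (y : V) : ~~ (y <= Xg k.+1 x)%MS -> Ssum A (Bup B kk (y^T *m y)) = 0.
  move=> hy; apply: (IH (ltnW hkn) _ (xup x kk y)).
  - move=> j; rewrite /Bup; case: ifP => _ //; by rewrite trmx_mul trmxK.
  - move=> j hj; rewrite /Bup /xup; case: ifP => // /negbT hjk.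
    apply: hBx; rewrite ltn_neqAle hj andbT; apply: contra hjk.
    by move/eqP => h; apply/eqP/val_inj.
  - exact: indep_step.
have [z hz] := exists_out (Xg k.+1 x).
have L2 (w : V) : Ssum A (Bup B kk (w^T *m w)) = 0.
  case: (boolP (w <= Xg k.+1 x)%MS) => hw; last exact: L1.
  have h1 : ~~ ((w + z)%R <= Xg k.+1 x)%MS.
    apply: contra hz => h; have -> : z = w + z + (-1) *: w by rewrite scaleN1r addrAC subrr add0r.
    by rewrite addmx_sub // scalemx_sub.
  have h2 : ~~ ((w - z)%R <= Xg k.+1 x)%MS.
    apply: contra hz => h; have -> : z = w + (-1) *: (w - z) by rewrite scaleN1r opprB addrC subrK.
    by rewrite addmx_sub // scalemx_sub.
  rewrite (ww_decomp w z); apply: Ssum_linD; last by apply: Ssum_linN; apply: L1.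
  by apply: Ssum_linZ; apply: Ssum_linD; apply: L1.
have L3 : Ssum A (Bup B kk (B kk)) = 0.
  rewrite (sym_decomp (hB kk)); apply: Ssum_linZ; apply: Ssum_linS => i.
  apply: Ssum_linS => l; apply: Ssum_linZ; rewrite delta_decomp.
  by apply: Ssum_linD; [apply: Ssum_linD; [exact: L2|] |]; apply: Ssum_linN; apply: L2.
have -> : B = Bup B kk (B kk).
  by apply: functional_extensionality => j; rewrite /Bup; case: eqP => [->|].
exact: L3.
Qed.

End Ind3.

Theorem theorem5p1 (R : realType) (n : nat)
    (A : 'I_n.+1 -> 'M[R[i]]_n.+1) (B : 'I_n -> 'M[R[i]]_n.+1) :
  (forall k, alternating_mx (A k)) ->
  (forall k, symmetric_mx (B k)) ->
  \sum_(s : 'S_n.+1) \sum_(t : 'S_n)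
     (((-1) ^+ s * (-1) ^+ t) : R[i]) *:
       ((\prod_(i < n) (A (s (widen_ord (leqnSn n) i)) *m B (t i)))
          *m A (s ord_max))
  = 0.
Proof.
move=> hA hB.
have -> : \sum_(s : 'S_n.+1) \sum_(t : 'S_n)
     (((-1) ^+ s * (-1) ^+ t) : R[i]) *:
       ((\prod_(i < n) (A (s (widen_ord (leqnSn n) i)) *m B (t i)))
          *m A (s ord_max)) = Ssum A B.
  rewrite /Ssum; apply: eq_bigr => s _; apply: eq_bigr => t _; congr (_ *: _).
  rewrite /Pm big_mkord; congr (_ *m _).
    apply: eq_bigr => i _; rewrite /a_of /b_of valK; congr (A (s _) *m _).
    by apply: val_inj; rewrite /= inordK // ltnS ltnW.
  by rewrite /a_of; congr (A (s _)); apply: val_inj; rewrite /= inordK.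
apply: (Pind hA (leqnn n) (x := fun _ => 0)) => //.
- by move=> j; rewrite leqNgt ltn_ord.
- by move=> c _ j; rewrite leqNgt ltn_ord.
Qed.
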